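(* Let $\mathcal{Q}$ be either the category of unital involutive quantales with unital involutive homomorphisms or the category of strong involutive quantales with strong involutive homomorphisms, and regard locales as objects of $\mathcal{Q}$. Then any colimit in $\mathcal{Q}$ of a diagram of locales is a strictly two-sided quantale.
   Context: A quantale is a complete lattice with an associative multiplication distributing over arbitrary joins in both variables; $1$ is its top. It is unital if it has a multiplicative unit $e$, strong if $1\cdot 1=1$. An involutive quantale has an involution $^*$ with $a^{**}=a$, $(a\cdot b)^*=b^*\cdot a^*$, $(\bigvee a_i)^*=\bigvee a_i^*$. Homomorphisms preserve joins and multiplication; unital ones preserve the unit, strong ones the top, involutive ones the involution. A locale (frame) is regarded as a unital involutive quantale with multiplication $\wedge$, unit the top and trivial involution; locale homomorphisms are exactly the unital (equivalently strong) quantale homomorphisms between locales. A strictly two-sided quantale is a unital quantale whose unit is its top. *)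

(* Defs.v *)
Set Implicit Arguments.

Definition img {A B : Type} (f : A -> B) (S : A -> Prop) : B -> Prop :=
  fun y => exists x, S x /\ y = f x.

Record IQuantale := {
  carrier :> Type;
  le : carrier -> carrier -> Prop;
  sup : (carrier -> Prop) -> carrier;
  mul : carrier -> carrier -> carrier;
  inv : carrier -> carrier;
  le_refl : forall a, le a a;
  le_trans : forall a b c, le a b -> le b c -> le a c;
  le_antisym : forall a b, le a b -> le b a -> a = b;
  sup_ub : forall (S : carrier -> Prop) a, S a -> le a (sup S);
  sup_least : forall (S : carrier -> Prop) b,
      (forall a, S a -> le a b) -> le (sup S) b;
  mul_assoc : forall a b c, mul a (mul b c) = mul (mul a b) c;
  mul_supr : forall a (S : carrier -> Prop),
      mul a (sup S) = sup (img (mul a) S);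
  mul_supl : forall (S : carrier -> Prop) b,
      mul (sup S) b = sup (img (fun x => mul x b) S);
  inv_inv : forall a, inv (inv a) = a;
  inv_mul : forall a b, inv (mul a b) = mul (inv b) (inv a);
  inv_sup : forall (S : carrier -> Prop), inv (sup S) = sup (img inv S)
}.

Arguments le {i} _ _.
Arguments sup {i} _.
Arguments mul {i} _ _.
Arguments inv {i} _.

Definition top (Q : IQuantale) : Q := sup (fun _ : Q => True).

Definition is_unit (Q : IQuantale) (e : Q) : Prop :=
  forall a : Q, mul e a = a /\ mul a e = a.

Definition unital (Q : IQuantale) : Prop := exists e : Q, is_unit Q e.

Definition strong (Q : IQuantale) : Prop := mul (top Q) (top Q) = top Q.

Definition strictly_two_sided (Q : IQuantale) : Prop := is_unit Q (top Q).

Definition is_iqhom (Q Q' : IQuantale) (f : Q -> Q') : Prop :=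
  (forall S : Q -> Prop, f (sup S) = sup (img f S)) /\
  (forall a b : Q, f (mul a b) = mul (f a) (f b)) /\
  (forall a : Q, f (inv a) = inv (f a)).

(** Locales, regarded as unital involutive quantales: multiplication is the
    binary meet (so the unit is the top) and the involution is trivial. *)
Definition is_locale (Q : IQuantale) : Prop :=
  (forall a b : Q, le (mul a b) a /\ le (mul a b) b /\
     forall c : Q, le c a -> le c b -> le c (mul a b)) /\
  (forall a : Q, inv a = a).

Inductive qkind := UnitalInv | StrongInv.

Definition qobj (K : qkind) (Q : IQuantale) : Prop :=
  match K with
  | UnitalInv => unital Q
  | StrongInv => strong Q
  end.

(** Morphisms of the category (units are unique, so "preserves the unit"
    is stated for any units of source and target). *)
Definition qhom (K : qkind) (Q Q' : IQuantale) (f : Q -> Q') : Prop :=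
  is_iqhom Q Q' f /\
  match K with
  | UnitalInv => forall (e : Q) (e' : Q'), is_unit Q e -> is_unit Q' e' -> f e = e'
  | StrongInv => f (top Q) = top Q'
  end.

Record Cat := {
  ob :> Type;
  hom : ob -> ob -> Type;
  cid : forall i, hom i i;
  ccomp : forall i j k, hom j k -> hom i j -> hom i k;
  ccomp_id_l : forall i j (u : hom i j), ccomp (cid j) u = u;
  ccomp_id_r : forall i j (u : hom i j), ccomp u (cid i) = u;
  ccomp_assoc : forall i j k l (u : hom k l) (v : hom j k) (w : hom i j),
      ccomp u (ccomp v w) = ccomp (ccomp u v) w
}.

Arguments hom {c} _ _.
Arguments cid {c} _.
Arguments ccomp {c i j k} _ _.

Record Diagram (K : qkind) (J : Cat) := {
  dob : J -> IQuantale;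
  dmap : forall i j, hom i j -> dob i -> dob j;
  dob_obj : forall i, qobj K (dob i);
  dmap_hom : forall i j (u : hom i j), qhom K (dob i) (dob j) (dmap i j u);
  dmap_id : forall i (x : dob i), dmap i i (cid i) x = x;
  dmap_comp : forall i j k (u : hom j k) (v : hom i j) (x : dob i),
      dmap i k (ccomp u v) x = dmap j k u (dmap i j v x)
}.

Arguments dob {K J} _ _.
Arguments dmap {K J} _ {i j} _ _.

Definition locale_diagram K J (D : Diagram K J) : Prop :=
  forall i, is_locale (dob D i).

Definition cocone K J (D : Diagram K J) (Q : IQuantale)
    (c : forall i, dob D i -> Q) : Prop :=
  qobj K Q /\
  (forall i, qhom K (dob D i) Q (c i)) /\
  (forall i j (u : hom i j) (x : dob D i), c j (dmap D u x) = c i x).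

Definition is_colimit K J (D : Diagram K J) (Q : IQuantale)
    (c : forall i, dob D i -> Q) : Prop :=
  cocone D Q c /\
  forall (Q' : IQuantale) (c' : forall i, dob D i -> Q'),
    cocone D Q' c' ->
    (exists h : Q -> Q', qhom K Q Q' h /\ forall i (x : dob D i), h (c i x) = c' i x) /\
    (forall h1 h2 : Q -> Q',
        qhom K Q Q' h1 -> (forall i (x : dob D i), h1 (c i x) = c' i x) ->
        qhom K Q Q' h2 -> (forall i (x : dob D i), h2 (c i x) = c' i x) ->
        forall y, h1 y = h2 y).

(* Main.v *)
Require Import Defs.
From Stdlib Require Import ProofIrrelevance Setoid.

Lemma sup_ext (Q : IQuantale) (S T : Q -> Prop) :
  (forall x, S x <-> T x) -> sup S = sup T.
Proof.
  intros H. apply le_antisym; apply sup_least; intros a Ha; apply sup_ub; apply H; auto.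
Qed.

Lemma le_sup2 (Q : IQuantale) (a b : Q) : le a b -> sup (fun x => x = a \/ x = b) = b.
Proof.
  intros H. apply le_antisym.
  - apply sup_least. intros x [->| ->]; auto using le_refl.
  - apply sup_ub. auto.
Qed.
Arguments le_sup2 {Q a b} _.


Lemma mul_mono_l (Q : IQuantale) (a b c : Q) : le a b -> le (mul a c) (mul b c).
Proof.
  intros H. rewrite <- (le_sup2 H). rewrite mul_supl. apply sup_ub. exists a. auto.
Qed.
Arguments mul_mono_l {Q a b} c _.


Lemma mul_mono_r (Q : IQuantale) (a b c : Q) : le a b -> le (mul c a) (mul c b).
Proof.
  intros H. rewrite <- (le_sup2 H). rewrite mul_supr. apply sup_ub. exists a. auto.
Qed.
Arguments mul_mono_r {Q a b} c _.


Lemma inv_mono (Q : IQuantale) (a b : Q) : le a b -> le (inv a) (inv b).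
Proof.
  intros H. rewrite <- (le_sup2 H). rewrite inv_sup. apply sup_ub. exists a. auto.
Qed.
Arguments inv_mono {Q a b} _.


Lemma hom_mono (Q Q' : IQuantale) (f : Q -> Q') (a b : Q) :
  is_iqhom Q Q' f -> le a b -> le (f a) (f b).
Proof.
  intros [Hs _] H. rewrite <- (le_sup2 H). rewrite Hs. apply sup_ub. exists a. auto.
Qed.
Arguments hom_mono {Q Q'} f {a b} _ _.


Lemma unit_unique (Q : IQuantale) (e e' : Q) : is_unit Q e -> is_unit Q e' -> e = e'.
Proof.
  intros H H'. destruct (H e') as [H1 _]. destruct (H' e) as [_ H2]. congruence.
Qed.
Arguments unit_unique {Q e e'} _ _.


Lemma inv_unit (Q : IQuantale) (e : Q) : is_unit Q e -> inv e = e.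
Proof.
  intros H. apply unit_unique; auto. intros a; split.
  - rewrite <- (inv_inv _ a) at 1. rewrite <- inv_mul. destruct (H (inv a)) as [_ ->].
    apply inv_inv.
  - rewrite <- (inv_inv _ a) at 1. rewrite <- inv_mul. destruct (H (inv a)) as [-> _].
    apply inv_inv.
Qed.
Arguments inv_unit {Q e} _.


Lemma inv_top (Q : IQuantale) : inv (top Q) = top Q.
Proof.
  unfold top. rewrite inv_sup. apply sup_ext. intros x; split; auto.
  intros _. exists (inv x). split; auto. symmetry; apply inv_inv.
Qed.

Lemma locale_top_unit (Q : IQuantale) : is_locale Q -> is_unit Q (top Q).
Proof.
  intros [H _] a. split; apply le_antisym.
  - apply (H _ a).
  - apply (H _ a). apply sup_ub; exact I. apply le_refl.
  - apply (H a _).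
  - apply (H a _). apply le_refl. apply sup_ub; exact I.
Qed.
Arguments locale_top_unit {Q} _.


Lemma qhom_comp K (A B C : IQuantale) (f : A -> B) (g : B -> C) :
  qobj K B -> qhom K A B f -> qhom K B C g -> qhom K A C (fun x => g (f x)).
Proof.
  intros HB [[fs [fm fi]] fk] [[gs [gm gi]] gk]. split; [split; [|split]|].
  - intros S. rewrite fs, gs. apply sup_ext. intros x; split.
    + intros [y [[z [Hz ->]] ->]]. exists z; auto.
    + intros [z [Hz ->]]. exists (f z). split; auto. exists z; auto.
  - intros a b. rewrite fm, gm. reflexivity.
  - intros a. rewrite fi, gi. reflexivity.
  - destruct K; simpl in *.
    + intros e e' He He'. destruct HB as [eB HeB]. rewrite (fk e eB); auto.
    + rewrite fk, gk. reflexivity.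
Qed.
Arguments qhom_comp {K A B C f g} _ _ _.


Lemma qhom_idf K (Q : IQuantale) : qhom K Q Q (fun y => y).
Proof.
  split; [split; [|split]|].
  - intros S. apply sup_ext. intros x; split.
    + intros H; exists x; auto.
    + intros [z [Hz ->]]; auto.
  - reflexivity.
  - reflexivity.
  - destruct K; simpl.
    + intros; apply unit_unique; auto.
    + reflexivity.
Qed.

Lemma sig_eq (A : Type) (P : A -> Prop) (a b : {x : A | P x}) :
  proj1_sig a = proj1_sig b -> a = b.
Proof.
  destruct a as [a pa], b as [b pb]; simpl; intros ->. f_equal. apply proof_irrelevance.
Qed.
Arguments sig_eq {A P a b} _.


Lemma img_val_P (Q : IQuantale) (P : Q -> Prop) (S : {x : Q | P x} -> Prop) :
  forall x, img (@proj1_sig _ _) S x -> P x.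
Proof. intros x [y [_ ->]]. apply proj2_sig. Qed.

Definition Sub (Q : IQuantale) (P : Q -> Prop)
  (Psup : forall S : Q -> Prop, (forall x, S x -> P x) -> P (sup S))
  (Pmul : forall a b, P a -> P b -> P (mul a b))
  (Pinv : forall a, P a -> P (inv a)) : IQuantale.
Proof.
  refine {| carrier := {x : Q | P x};
            le := fun a b => le (proj1_sig a) (proj1_sig b);
            sup := fun S => exist _ (sup (img (@proj1_sig _ _) S)) (Psup _ (img_val_P _ _ S));
            mul := fun a b => exist _ (mul (proj1_sig a) (proj1_sig b))
                                 (Pmul _ _ (proj2_sig a) (proj2_sig b));
            inv := fun a => exist _ (inv (proj1_sig a)) (Pinv _ (proj2_sig a)) |}.
  - intros a; apply le_refl.
  - intros a b c; apply le_trans.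
  - intros a b H1 H2. apply sig_eq. apply le_antisym; auto.
  - intros S a Ha. apply sup_ub. exists a; auto.
  - intros S b H. apply sup_least. intros x [y [Hy ->]]. auto.
  - intros a b c. apply sig_eq. apply mul_assoc.
  - intros a S. apply sig_eq. simpl. rewrite mul_supr. apply sup_ext. intros x; split.
    + intros [y [[z [Hz ->]] ->]]. eexists; split; [exists z; split; [exact Hz| reflexivity]|].
      reflexivity.
    + intros [y [[z [Hz ->]] ->]]. exists (proj1_sig z). split; auto. exists z; auto.
  - intros S b. apply sig_eq. simpl. rewrite mul_supl. apply sup_ext. intros x; split.
    + intros [y [[z [Hz ->]] ->]]. eexists; split; [exists z; split; [exact Hz| reflexivity]|].
      reflexivity.
    + intros [y [[z [Hz ->]] ->]]. exists (proj1_sig z). split; auto. exists z; auto.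
  - intros a. apply sig_eq. apply inv_inv.
  - intros a b. apply sig_eq. apply inv_mul.
  - intros S. apply sig_eq. simpl. rewrite inv_sup. apply sup_ext. intros x; split.
    + intros [y [[z [Hz ->]] ->]]. eexists; split; [exists z; split; [exact Hz| reflexivity]|].
      reflexivity.
    + intros [y [[z [Hz ->]] ->]]. exists (proj1_sig z). split; auto. exists z; auto.
Defined.

Lemma gen K J (D : Diagram K J) (Q : IQuantale) (c : forall i, dob D i -> Q)
  (P : Q -> Prop)
  (Psup : forall S : Q -> Prop, (forall x, S x -> P x) -> P (sup S))
  (Pmul : forall a b, P a -> P b -> P (mul a b))
  (Pinv : forall a, P a -> P (inv a)) (Pc : forall i x, P (c i x))
  (Hobj : qobj K (Sub Q P Psup Pmul Pinv))
  (Hincl : qhom K (Sub Q P Psup Pmul Pinv) Q (@proj1_sig _ _))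
  (Hci : forall i, qhom K (dob D i) (Sub Q P Psup Pmul Pinv)
                     (fun x => exist P (c i x) (Pc i x))) :
  is_colimit D Q c -> forall y, P y.
Proof.
  intros [Hco Hu] y.
  assert (cc : cocone D (Sub Q P Psup Pmul Pinv) (fun i x => exist P (c i x) (Pc i x))).
  { destruct Hco as [_ [_ Hcomp]].
    split; [exact Hobj| split; [exact Hci|]]. intros. apply sig_eq. simpl. apply Hcomp. }
  destruct (Hu _ _ cc) as [[h [Hh Hhc]] _].
  destruct (Hu Q c Hco) as [_ Huniq].
  assert (E := Huniq (fun y => proj1_sig (h y)) (fun y => y)
     (qhom_comp Hobj Hh Hincl) (fun i x => f_equal (@proj1_sig _ _) (Hhc i x))
     (qhom_idf K Q) (fun i x => eq_refl) y).
  simpl in E. rewrite <- E. apply proj2_sig.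
Qed.

Lemma incl_iqhom (Q : IQuantale) (P : Q -> Prop) Psup Pmul Pinv :
  is_iqhom (Sub Q P Psup Pmul Pinv) Q (@proj1_sig _ _).
Proof. split; [|split]; reflexivity. Qed.

Lemma cores_iqhom (A Q : IQuantale) (P : Q -> Prop) Psup Pmul Pinv (f : A -> Q)
  (Pf : forall x, P (f x)) :
  is_iqhom A Q f -> is_iqhom A (Sub Q P Psup Pmul Pinv) (fun x => exist P (f x) (Pf x)).
Proof.
  intros [fs [fm fi]]. split; [|split].
  - intros S. apply sig_eq. simpl. rewrite fs. apply sup_ext. intros x; split.
    + intros [y [Hy ->]]. eexists; split; [exists y; split; [exact Hy|reflexivity]|]. reflexivity.
    + intros [y [[z [Hz ->]] ->]]. exists z; auto.
  - intros a b. apply sig_eq. apply fm.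
  - intros a. apply sig_eq. apply fi.
Qed.

Lemma sub_top (Q : IQuantale) (P : Q -> Prop) Psup Pmul Pinv :
  P (top Q) -> proj1_sig (top (Sub Q P Psup Pmul Pinv)) = top Q.
Proof.
  intros Ht. apply le_antisym.
  - apply sup_ub. exact I.
  - apply sup_ub. exists (exist P (top Q) Ht). split; [exact I|reflexivity].
Qed.

Theorem corollary4p2 (K : qkind) (J : Cat) (D : Diagram K J)
    (Q : IQuantale) (c : forall i, dob D i -> Q) :
  locale_diagram D -> is_colimit D Q c -> strictly_two_sided Q.
Proof.
  intros HL Hcol. pose proof Hcol as [[HQ [Hc Hcomp]] _].
  destruct K.
  - destruct HQ as [e He].
    set (P := fun x : Q => le x e).
    assert (Psup : forall S : Q -> Prop, (forall x, S x -> P x) -> P (sup S)).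
    { intros S H. apply sup_least. exact H. }
    assert (Pmul : forall a b, P a -> P b -> P (mul a b)).
    { intros a b Ha Hb. unfold P in *. eapply le_trans. apply (mul_mono_l b Ha).
      rewrite (proj1 (He b)). exact Hb. }
    assert (Pinv : forall a, P a -> P (inv a)).
    { intros a Ha. unfold P in *. rewrite <- (inv_unit He). apply inv_mono. exact Ha. }
    assert (Hci_e : forall i, c i (top _) = e).
    { intros i. apply (proj2 (Hc i)); auto. apply locale_top_unit. apply HL. }
    assert (Pc : forall i x, P (c i x)).
    { intros i x. unfold P. rewrite <- (Hci_e i). apply hom_mono. apply (Hc i).
      apply sup_ub. exact I. }
    set (S' := Sub Q P Psup Pmul Pinv).
    set (eS := exist P e (le_refl _ e) : S').
    assert (HeS : is_unit S' eS).
    { intros a; split; apply sig_eq; apply He. }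
    assert (Hall : forall y, P y).
    { apply (gen _ _ D Q c P Psup Pmul Pinv Pc).
      - exists eS. exact HeS.
      - split. apply incl_iqhom. simpl. intros e1 e' He1 He'.
        rewrite <- (unit_unique HeS He1). simpl. apply unit_unique; auto.
      - intros i. split. apply cores_iqhom. apply (Hc i). simpl.
        intros ei e1 Hei He1. rewrite <- (unit_unique HeS He1). apply sig_eq. simpl.
        apply (proj2 (Hc i)); auto.
      - exact Hcol. }
    assert (Hte : top Q = e).
    { apply le_antisym. apply sup_least. intros a _. apply Hall. apply sup_ub. exact I. }
    unfold strictly_two_sided. rewrite Hte. exact He.
  - simpl in HQ.
    set (P := fun x : Q => mul (top Q) x = x /\ mul x (top Q) = x).
    assert (Psup : forall S : Q -> Prop, (forall x, S x -> P x) -> P (sup S)).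
    { intros S H. split; [rewrite mul_supr|rewrite mul_supl]; apply sup_ext;
      intros x; split.
      - intros [y [Hy ->]]. rewrite (proj1 (H y Hy)). exact Hy.
      - intros Hx. exists x. split; auto. symmetry; apply (H x Hx).
      - intros [y [Hy ->]]. rewrite (proj2 (H y Hy)). exact Hy.
      - intros Hx. exists x. split; auto. symmetry; apply (H x Hx). }
    assert (Pmul : forall a b, P a -> P b -> P (mul a b)).
    { intros a b [Ha1 Ha2] [Hb1 Hb2]. split.
      - rewrite mul_assoc, Ha1. reflexivity.
      - rewrite <- mul_assoc, Hb2. reflexivity. }
    assert (Pinv : forall a, P a -> P (inv a)).
    { intros a [H1 H2]. split.
      - rewrite <- (inv_top Q). rewrite <- inv_mul. rewrite H2. reflexivity.
      - rewrite <- (inv_top Q). rewrite <- inv_mul. rewrite H1. reflexivity. }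
    assert (Pc : forall i x, P (c i x)).
    { intros i x. destruct (Hc i) as [[_ [Hm _]] Ht]. simpl in Ht. split.
      - rewrite <- Ht, <- Hm. rewrite (proj1 (locale_top_unit (HL i) x)). reflexivity.
      - rewrite <- Ht, <- Hm. rewrite (proj2 (locale_top_unit (HL i) x)). reflexivity. }
    assert (Ptop : P (top Q)) by (split; exact HQ).
    set (S' := Sub Q P Psup Pmul Pinv).
    assert (Htop : proj1_sig (top S') = top Q) by (apply sub_top; exact Ptop).
    assert (Hall : forall y, P y).
    { apply (gen _ _ D Q c P Psup Pmul Pinv Pc).
      - simpl. unfold strong. apply sig_eq.
        change (mul (proj1_sig (top S')) (proj1_sig (top S')) = proj1_sig (top S')).
        rewrite Htop. exact HQ.
      - split. apply incl_iqhom. exact Htop.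
      - intros i. split. apply cores_iqhom. apply (Hc i). simpl.
        apply sig_eq. change (c i (top (dob D i)) = proj1_sig (top S')). rewrite Htop. apply (proj2 (Hc i)).
      - exact Hcol. }
    intros a. split; apply (Hall a).
Qed.
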